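(* For any categorial sequential allocation mechanism $f_\mathcal O$, any assignment of each agent as optimistic or pessimistic, any agent $j$, and any profile: (1) if $j$ is optimistic, then the rank (in $R_j$) of the bundle allocated to $j$ is at most $n^p+1-\prod_{l=K_j}^{p}k_{j,\mathcal O_j(l)}$; (2) if $j$ is pessimistic, then the rank of the bundle allocated to $j$ is at most $n^p-\sum_{l=1}^{p}(k_{j,\mathcal O_j(l)}-1)$.
   Context: Basic categorized domain: $n$ agents, $p$ categories $D_i=\{1,\ldots,n\}$ of indivisible items, bundles $\mathfrak D=D_1\times\cdots\times D_p$; each agent $j$ has a linear order $R_j$ over $\mathfrak D$ (a profile is $(R_1,\ldots,R_n)$). $\mathrm{Rank}(R,\vec d)\in\{1,\ldots,n^p\}$ is the position of $\vec d$ in $R$ (top position has rank $1$). Categorial sequential allocation mechanism (CSAM) $f_\mathcal O$: given a linear order $\mathcal O$ over $\{1,\ldots,n\}\times\{1,\ldots,p\}$, in rounds $t=1,\ldots,np$, if the $t$-th element of $\mathcal O$ is $(j,i)$ then agent $j$ chooses an item $d_{j,i}$ from $D_{i,t}$, the set of items of $D_i$ not yet chosen at the start of round $t$; the choice is announced to all. Agent $j$ finally receives $(d_{j,1},\ldots,d_{j,p})$. Each agent is fixed in advance to be optimistic or pessimistic. When agent $j$ chooses from $D_i$ in round $t$, a bundle is available to her if for each category $l$ from which she has already chosen its $l$-th component equals her chosen item $d_{j,l}$, and for each other category $l$ its $l$-th component lies in $D_{l,t}$. An optimistic agent chooses the $i$-th component of her top-ranked available bundle. A pessimistic agent chooses the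 $d\in D_{i,t}$ for which her lowest-ranked available bundle with $i$-th component $d$ is highest in $R_j$. Notation: $\mathcal O_j$ is the order over categories in which agent $j$ chooses in $\mathcal O$ ($\mathcal O_j(l)$ is the $l$-th category she chooses from). $k_{j,i}$ is the number of items in $D_i$ still available right before $j$ chooses from $D_i$, i.e. $n$ minus the number of agents who choose from $D_i$ before $j$ in $\mathcal O$. $K_j$ is the smallest index $K\in\{1,\ldots,p\}$ such that for every $l$ with $K<l\leq p$, no agent chooses an item from category $\mathcal O_j(l)$ in any round strictly between the round of $(j,\mathcal O_j(K))$ and the round of $(j,\mathcal O_j(l))$. *)

(* Defs.v *)
From mathcomp Require Import all_boot.
Set Implicit Arguments. Unset Strict Implicit. Unset Printing Implicit Defensive.

Section CSAM.
Variables (n p : nat).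

(* agents = 'I_n, categories = 'I_p, items of each category D_i = 'I_n *)
Definition bundle := {ffun 'I_p -> 'I_n}.

(* A linear order R over bundles is a list of all bundles, best first. *)
Definition is_linear_order (R : seq bundle) : Prop := perm_eq R (enum {: bundle}).
Definition Rank (R : seq bundle) (d : bundle) : nat := (index d R).+1.

(* A CSAM order O over agents x categories: list of all pairs, round t = t-th element *)
Definition is_csam_order (O : seq ('I_n * 'I_p)) : Prop :=
  perm_eq O (enum {: 'I_n * 'I_p}).

(* history of announced choices (agent, category, item) *)
Definition history := seq ('I_n * 'I_p * 'I_n).

Definition chosen_from (h : history) (j : 'I_n) (l : 'I_p) : option 'I_n :=
  ohead [seq x.2 | x <- h & (x.1.1 == j) && (x.1.2 == l)].

Definition taken (h : history) (l : 'I_p) (d : 'I_n) : bool :=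
  has (fun x => (x.1.2 == l) && (x.2 == d)) h.

Definition available (h : history) (j : 'I_n) (b : bundle) : bool :=
  [forall l, if chosen_from h j l is Some d then b l == d else ~~ taken h l (b l)].

(* optimistic: i-th component of top-ranked available bundle
   (default value j is never used in a valid run) *)
Definition opt_choice (R : seq bundle) (h : history) (j : 'I_n) (i : 'I_p) : 'I_n :=
  odflt j (omap (fun b : bundle => b i) (ohead [seq b <- R | available h j b])).

Definition worst_rank (R : seq bundle) (h : history) (j : 'I_n) (i : 'I_p) (d : 'I_n) : nat :=
  \max_(b : bundle | available h j b && (b i == d)) Rank R b.

(* pessimistic: choose d in D_{i,t} whose worst available bundle is ranked highest *)
Definition pess_choice (R : seq bundle) (h : history) (j : 'I_n) (i : 'I_p) : 'I_n :=
  odflt j [pick d | ~~ taken h i d &&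
                    [forall d', ~~ taken h i d' ==> (worst_rank R h j i d <= worst_rank R h j i d')]].

Definition choice (optim : 'I_n -> bool) (R : 'I_n -> seq bundle)
    (h : history) (j : 'I_n) (i : 'I_p) : 'I_n :=
  if optim j then opt_choice (R j) h j i else pess_choice (R j) h j i.

Definition run (O : seq ('I_n * 'I_p)) optim R : history :=
  foldl (fun h (ji : 'I_n * 'I_p) => rcons h (ji.1, ji.2, choice optim R h ji.1 ji.2)) [::] O.

Definition csam (O : seq ('I_n * 'I_p)) optim R (j : 'I_n) : bundle :=
  [ffun i => odflt j (chosen_from (run O optim R) j i)].

(* O_j: list of categories in the order j chooses them (O_j(l) = nth (l-1)) *)
Definition Oj (O : seq ('I_n * 'I_p)) (j : 'I_n) : seq 'I_p :=
  [seq x.2 | x <- O & x.1 == j].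

Definition kji (O : seq ('I_n * 'I_p)) (j : 'I_n) (i : 'I_p) : nat :=
  n - count (fun x : 'I_n * 'I_p => x.2 == i) (take (index (j, i) O) O).

Definition nobody_between (O : seq ('I_n * 'I_p)) (j : 'I_n) (a c : 'I_p) : bool :=
  all (fun x : 'I_n * 'I_p => x.2 != c) (drop (index (j, a) O).+1 (take (index (j, c) O) O)).

(* condition for K (0-indexed K0 = K - 1) *)
Definition Kcond (O : seq ('I_n * 'I_p)) (j : 'I_n) (K0 : nat) : bool :=
  [forall a : 'I_p, forall c : 'I_p,
     ((index a (Oj O j) == K0) && (K0 < index c (Oj O j))) ==> nobody_between O j a c].

(* K_j - 1 : smallest 0-indexed K0 in {0..p-1} satisfying the condition *)
Definition Kj0 (O : seq ('I_n * 'I_p)) (j : 'I_n) : nat := find (Kcond O j) (iota 0 p).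

End CSAM.

(* Main.v *)
Require Import Defs.
From mathcomp Require Import all_boot zify.
Set Implicit Arguments. Unset Strict Implicit. Unset Printing Implicit Defensive.

Section Gen.
Variables n p : nat.
Implicit Types (h : history n p) (j : 'I_n) (l c : 'I_p) (b : bundle n p).

Lemma chosen_from_rcons h x j l :
  chosen_from (rcons h x) j l =
  if chosen_from h j l is Some d then Some d
  else if (x.1.1 == j) && (x.1.2 == l) then Some x.2 else None.
Proof.
rewrite /chosen_from filter_rcons.
case: ifP => Hx; last by case: (ohead _).
rewrite map_rcons; case: [seq _ | _ <- _ & _] => //.
Qed.

Lemma taken_rcons h x l d :
  taken (rcons h x) l d = taken h l d || ((x.1.2 == l) && (x.2 == d)).
Proof. by rewrite /taken has_rcons orbC. Qed.

Lemma avail_rcons_other h x j b :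
  x.1.1 != j -> available (rcons h x) j b -> available h j b.
Proof.
move=> Hx /forallP Hb; apply/forallP => l; have := Hb l.
rewrite chosen_from_rcons (negbTE Hx) /=.
case: (chosen_from h j l) => //.
by rewrite taken_rcons negb_or => /andP[].
Qed.

Lemma avail_rcons_own h j c d b :
  chosen_from h j c = None -> ~~ taken h c d ->
  available (rcons h (j, c, d)) j b -> available h j b && (b c == d).
Proof.
move=> Hc Hd /forallP Hb; apply/andP; split; last first.
  by have := Hb c; rewrite chosen_from_rcons Hc /= !eqxx.
apply/forallP => l; have := Hb l.
rewrite chosen_from_rcons /=.
case: (chosen_from h j l) => // .
rewrite eqxx /=; case: eqP => [<-|_].
  by move/eqP->.
by rewrite taken_rcons negb_or => /andP[].
Qed.

Lemma avail_rcons_own2 h j c d b :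
  chosen_from h j c = None -> available h j b -> b c = d ->
  available (rcons h (j, c, d)) j b.
Proof.
move=> Hc /forallP Hb Hbc; apply/forallP => l; have := Hb l.
rewrite chosen_from_rcons /= eqxx /=.
case: (chosen_from h j l) => //.
case: eqP => [<-|Hl]; first by rewrite Hbc.
by rewrite taken_rcons negb_or => -> /=; case: eqP.
Qed.

Lemma card_bundle : #|{: bundle n p}| = n ^ p.
Proof. by rewrite card_ffun !card_ord. Qed.

Lemma rank_le (R : seq (bundle n p)) b : is_linear_order R -> Rank R b <= n ^ p.
Proof.
move=> HR; rewrite /Rank -card_bundle cardT -(perm_size HR) index_mem.
by rewrite (perm_mem HR) mem_enum.
Qed.

Lemma rank_inj (R : seq (bundle n p)) b b' : is_linear_order R -> Rank R b = Rank R b' -> b = b'.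
Proof.
move=> HR [] E.
have mem x : x \in R by rewrite (perm_mem HR) mem_enum.
by rewrite -(nth_index b (mem b)) E nth_index.
Qed.

Definition Fam h j : forall l, pred 'I_n :=
  fun l => if chosen_from h j l is Some d then pred1 d else [pred e | ~~ taken h l e].

Lemma avail_family h j : available h j =i family (Fam h j).
Proof.
move=> b; rewrite !inE; apply/forallP/familyP => H l; have := H l;
by rewrite /Fam; case: (chosen_from h j l).
Qed.

Lemma card_avail h j : #|available h j| = \prod_(l : 'I_p) #|Fam h j l|.
Proof.
rewrite (eq_card (avail_family h j)) card_family.
rewrite /image_mem /= /index_enum -enumT; elim: (enum _) => [|x s IH].
  by rewrite big_nil.
by rewrite big_cons /= IH.
Qed.


Lemma exists_avail h j c d :
  chosen_from h j c = None -> ~~ taken h c d ->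
  (forall l, chosen_from h j l = None -> exists e, ~~ taken h l e) ->
  exists b, available h j b && (b c == d).
Proof.
move=> Hc Hd Hex.
exists [ffun l => if l == c then d else if chosen_from h j l is Some e then e
                  else odflt d [pick e | ~~ taken h l e]].
rewrite ffunE eqxx; apply/andP; split =>//; apply/forallP => l; rewrite ffunE.
case: eqP => [->|Hl]; first by rewrite Hc.
case E: (chosen_from h j l) => [e|] //.
case: pickP => [e He|Hn] //.
by have [e He] := Hex l E; have := Hn e; rewrite He.
Qed.

Lemma worst_witness (R : seq (bundle n p)) h j c d :
  (exists b, available h j b && (b c == d)) ->
  exists2 b, available h j b && (b c == d) & worst_rank R h j c d = Rank R b.
Proof.
move=> [b0 Hb0].
have [|b Hb E] := @eq_bigmax_cond _ [pred b | available h j b && (b c == d)] (Rank R).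
  by apply/card_gt0P; exists b0.
by exists b.
Qed.

Lemma pess_core (R : seq (bundle n p)) h j c k :
 is_linear_order R ->
 chosen_from h j c = None ->
 (forall l, chosen_from h j l = None -> exists d, ~~ taken h l d) ->
 k <= #|[pred d | ~~ taken h c d]| ->
 ~~ taken h c (pess_choice R h j c) /\
 worst_rank R h j c (pess_choice R h j c) + (k - 1) <= \max_(b | available h j b) Rank R b.
Proof.
move=> HR Hc Hex Hk.
set U := [pred d | ~~ taken h c d].
set M := \max_(b | available h j b) Rank R b.
have [d0 Hd0] := Hex c Hc.
have wit d : d \in U -> exists2 b, available h j b && (b c == d) & worst_rank R h j c d = Rank R b.
  by move=> Hd; apply: worst_witness; apply: exists_avail.
have wM d : d \in U -> worst_rank R h j c d <= M.
  move=> /wit [b /andP[Hb _] ->]; exact: leq_bigmax_cond.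
have winj : {in U &, injective (worst_rank R h j c)}.
  move=> d d' /wit [b /andP[_ /eqP <-] ->] /wit [b' /andP[_ /eqP <-] ->] E.
  by rewrite (rank_inj HR E).
rewrite /pess_choice; case: pickP => [ds /andP[Hds /forallP Hmin] | Hn]; last first.
  case: (arg_minnP (worst_rank R h j c) (Hd0 : d0 \in U)) => m Hm Hmin.
  have := Hn m; rewrite (Hm : ~~ taken h c m) /=.
  move=> /negbT/negP H; exfalso; apply: H; apply/forallP => d'; apply/implyP => Hd'; exact: Hmin.
split => //=.
set w := worst_rank R h j c ds.
set s := [seq worst_rank R h j c d | d <- enum U].
have us : uniq s by rewrite map_inj_in_uniq ?enum_uniq // => x y; rewrite !mem_enum; exact: winj.
have ss : {subset s <= iota w (M.+1 - w)}.
  move=> v /mapP [d]; rewrite mem_enum => Hd ->; rewrite mem_iota.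
  have := wM d Hd; have := implyP (Hmin d) Hd; have := wM ds Hds; rewrite -/w; lia.
have H1 : #|U| <= M.+1 - w by have := uniq_leq_size us ss; rewrite size_map size_iota -cardE.
have H2 : 0 < #|U| by apply/card_gt0P; exists d0.
have H3 : k <= #|U| := Hk.
have := wM ds Hds; rewrite -/w.
move: H1 H2 H3; move: #|U| => u; lia.
Qed.

Lemma find_sub (T : Type) (x0 : T) (A A' : pred T) s :
  (forall x, A' x -> A x) -> has A s -> A' (nth x0 s (find A s)) -> find A' s = find A s.
Proof.
move=> sub; elim: s => [|y s IH] //= Hh.
case Ay: (A y) => /=.
  by move=> ->.
have -> : A' y = false by apply/negbTE/negP => /sub; rewrite Ay.
by rewrite Ay /= in Hh => /(IH Hh) ->.
Qed.

Lemma ohead_filter (T : Type) (x0 : T) (A : pred T) s :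
  ohead [seq x <- s | A x] = if has A s then Some (nth x0 s (find A s)) else None.
Proof. by elim: s => [|y s IH] //=; case: (A y). Qed.

End Gen.

Section Run.
Variables (n p : nat) (O : seq ('I_n * 'I_p)) (optim : 'I_n -> bool) (R : 'I_n -> seq (bundle n p)).
Hypothesis HO : is_csam_order O.
Variable j : 'I_n.

Definition H t := run (take t O) optim R.
Definition ttj (c : 'I_p) := index (j, c) O.
Local Notation oj := (Oj O j).

Lemma uniqO : uniq O.
Proof. by rewrite (perm_uniq HO) enum_uniq. Qed.

Lemma memO x : x \in O.
Proof. by rewrite (perm_mem HO) mem_enum. Qed.

Lemma run_fst_gen (l : seq ('I_n * 'I_p)) (h : history n p) :
  map (fun x => x.1) (foldl (fun h (ji : 'I_n * 'I_p) =>
     rcons h (ji.1, ji.2, choice optim R h ji.1 ji.2)) h l) = map (fun x => x.1) h ++ l.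
Proof.
elim: l h => [|x l IH] h /=; first by rewrite cats0.
by rewrite IH map_rcons cat_rcons; case: x.
Qed.

Lemma H_fst t : map (fun x => x.1) (H t) = take t O.
Proof. by rewrite /H /run run_fst_gen. Qed.

Lemma Hstep t x s : drop t O = x :: s ->
  H t.+1 = rcons (H t) (x.1, x.2, choice optim R (H t) x.1 x.2).
Proof.
move=> E.
have Ht : t < size O by rewrite -subn_gt0 -size_drop E.
rewrite /H (take_nth x Ht).
have -> : nth x O t = x by rewrite -[t]addn0 -nth_drop E.
by rewrite /run foldl_rcons.
Qed.

Lemma chosenN t c : (chosen_from (H t) j c == None) = (t <= ttj c).
Proof.
rewrite /chosen_from.
have -> : forall S : seq 'I_n, (ohead S == None) = (S == [::]) by case.
have -> : ([seq x.2 | x <- H t & (x.1.1 == j) && (x.1.2 == c)] == [::]) =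
          ~~ has (fun x : 'I_n * 'I_p * 'I_n => x.1 == (j, c)) (H t).
  by rewrite has_filter negbK -size_eq0 size_map size_eq0; congr (_ == _); apply: eq_filter => -[[? ?] ?].
rewrite -(has_map (fun x => x.1) (pred1 (j, c))) H_fst has_pred1 (in_take _ (memO _)).
by rewrite -leqNgt.
Qed.

Lemma chosen_final c : exists d, chosen_from (H (size O)) j c = Some d.
Proof.
case E: (chosen_from _ _ _) => [d|]; first by exists d.
by move/eqP: E; rewrite chosenN leqNgt /ttj index_mem memO.
Qed.

Lemma count_cat_O (c : 'I_p) : count (fun x : 'I_n * 'I_p => x.2 == c) O = n.
Proof.
rewrite -size_filter.
rewrite -(size_map (fun x : 'I_n * 'I_p => x.1)).
have U : uniq [seq x.1 | x <- O & x.2 == c].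
  rewrite map_inj_in_uniq ?filter_uniq ?uniqO // => -[a1 a2] [b1 b2].
  by rewrite !mem_filter /= => /andP[/eqP -> _] /andP[/eqP -> _] ->.
rewrite -(card_uniqP U); apply: etrans (card_ord n); apply: eq_card => i.
rewrite inE; apply/mapP; exists (i, c) => //.
by rewrite mem_filter eqxx memO.
Qed.

Lemma untaken_card h l :
  n - count (fun x : 'I_n * 'I_p * 'I_n => x.1.2 == l) h <= #|[pred d | ~~ taken h l d]|.
Proof.
have E : #|[pred d | taken h l d]| + #|[pred d | ~~ taken h l d]| = n.
  by rewrite (cardC [pred d | taken h l d]) card_ord.
have : #|[pred d | taken h l d]| <= count (fun x : 'I_n * 'I_p * 'I_n => x.1.2 == l) h.
  rewrite -size_filter -(size_map (fun x => x.2)).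
  apply: leq_trans (card_size _); apply: subset_leq_card; apply/subsetP => d.
  rewrite inE /taken => /hasP [x Hx /andP[Hl /eqP Hd]].
  by apply/mapP; exists x; rewrite ?mem_filter ?Hl.
lia.
Qed.

Lemma count_take_mono (P : pred ('I_n * 'I_p)) t t' : t <= t' -> count P (take t O) <= count P (take t' O).
Proof.
move=> le; rewrite -(take_takel O le) -{2}(cat_take_drop t (take t' O)) count_cat; exact: leq_addr.
Qed.

Lemma kji_pos c : 0 < kji O j c.
Proof.
rewrite /kji subn_gt0 -/(ttj c); move: (count_cat_O c).
rewrite -{1}(cat_take_drop (ttj c) O) count_cat (drop_index (memO (j, c))) /= eqxx; lia.
Qed.

Lemma untaken_ge t l : t <= ttj l -> kji O j l <= #|[pred d | ~~ taken (H t) l d]|.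
Proof.
move=> le; apply: leq_trans (untaken_card _ _).
have -> : count (fun x : 'I_n * 'I_p * 'I_n => x.1.2 == l) (H t) =
          count (fun x : 'I_n * 'I_p => x.2 == l) (take t O) by rewrite -H_fst count_map.
rewrite /kji leq_sub2l // count_take_mono //.
Qed.

Lemma exists_untaken t l : chosen_from (H t) j l = None -> exists d, ~~ taken (H t) l d.
Proof.
move/eqP; rewrite chosenN => /untaken_ge Hk.
have : 0 < #|[pred d | ~~ taken (H t) l d]| by apply: leq_trans (kji_pos l) Hk.
by move/card_gt0P => [d Hd]; exists d.
Qed.


Lemma take_succ t x s : drop t O = x :: s -> take t.+1 O = rcons (take t O) x.
Proof.
move=> E.
have Ht : t < size O by rewrite -subn_gt0 -size_drop E.
rewrite (take_nth x Ht).
by have -> : nth x O t = x by rewrite -[t]addn0 -nth_drop E.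
Qed.

Lemma drop_tt c : exists s, drop (ttj c) O = (j, c) :: s.
Proof. by exists (drop (ttj c).+1 O); rewrite /ttj drop_index // memO. Qed.

Lemma oj_uniq : uniq oj.
Proof.
rewrite /Oj map_inj_in_uniq ?filter_uniq ?uniqO // => -[a1 a2] [b1 b2].
by rewrite !mem_filter /= => /andP[/eqP -> _] /andP[/eqP -> _] ->.
Qed.

Lemma mem_oj c : c \in oj.
Proof. by apply/mapP; exists (j, c); rewrite ?mem_filter ?eqxx ?memO. Qed.

Lemma perm_oj : perm_eq oj (enum 'I_p).
Proof. by apply: uniq_perm; rewrite ?oj_uniq ?enum_uniq // => c; rewrite mem_enum mem_oj. Qed.

Lemma size_oj : size oj = p.
Proof. by rewrite (perm_size perm_oj) -cardT card_ord. Qed.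

Lemma index_oj c : index c oj = count (fun x : 'I_n * 'I_p => x.1 == j) (take (ttj c) O).
Proof.
rewrite /Oj -{1}(cat_take_drop (ttj c) O) filter_cat map_cat index_cat.
have [s ->] := drop_tt c.
rewrite /= eqxx /= eqxx addn0 size_map size_filter.
case: ifP => // /mapP [[a b]]; rewrite mem_filter /= => /andP[/eqP -> Hin] E.
by move: Hin; rewrite -E (in_take _ (memO _)) ltnn.
Qed.

Lemma index_oj_le c c' : (index c oj <= index c' oj) = (ttj c <= ttj c').
Proof.
rewrite !index_oj; apply/idP/idP; last exact: count_take_mono.
apply: contraLR; rewrite -!ltnNge => lt.
have [s E] := drop_tt c'.
apply: leq_trans (count_take_mono _ lt).
by rewrite (take_succ E) -cats1 count_cat /= eqxx addn1.
Qed.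

Lemma untaken_ex_all t l : chosen_from (H t) j l = None -> exists d, ~~ taken (H t) l d.
Proof. exact: exists_untaken. Qed.

End Run.

Section Pess.
Variables (n p : nat) (O : seq ('I_n * 'I_p)) (optim : 'I_n -> bool) (R : 'I_n -> seq (bundle n p)).
Hypothesis HO : is_csam_order O.
Hypothesis HR : forall j, is_linear_order (R j).
Variable j : 'I_n.
Local Notation oj := (Oj O j).
Local Notation H := (H O optim R).
Local Notation ttj := (ttj O j).

Lemma tt_eq t x s c : drop t O = x :: s -> (ttj c == t) = (x == (j, c)).
Proof.
move=> E; have Ht : t < size O by rewrite -subn_gt0 -size_drop E.
have Ex : nth x O t = x by rewrite -[t]addn0 -nth_drop E.
apply/eqP/eqP => [Et|Exj].
  by have [s' E'] := drop_tt HO j c; move: E; rewrite -Et E' => -[].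
by rewrite /ttj -Exj -{1}Ex index_uniq // (uniqO HO).
Qed.

Lemma sum_oj (P : pred 'I_p) F : \sum_(c <- oj | P c) F c = \sum_(c | P c) F c.
Proof. by rewrite (perm_big _ (perm_oj HO j)) /index_enum -enumT. Qed.

Lemma prod_oj (P : pred 'I_p) F : \prod_(c <- oj | P c) F c = \prod_(c | P c) F c.
Proof. by rewrite (perm_big _ (perm_oj HO j)) /index_enum -enumT. Qed.

Lemma csam_avail : available (H (size O)) j (csam O optim R j).
Proof.
apply/forallP => l; have [d Hd] := chosen_final optim R HO j l.
move: Hd; rewrite /H take_size => Hd; by rewrite Hd /csam ffunE Hd.
Qed.

Definition M t := \max_(b | available (H t) j b) Rank (R j) b.
Definition S t := \sum_(c <- oj | ttj c < t) (kji O j c - 1).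

Lemma pess_inv t : ~~ optim j -> t <= size O -> M t + S t <= n ^ p.
Proof.
move=> Hopt; elim: t => [|t IH] Ht.
  rewrite /S big_pred0 // addn0; apply/bigmax_leqP => b _; exact: rank_le.
have Ht' : t < size O by [].
have := IH (ltnW Ht).
have [x [s E]] : exists x s, drop t O = x :: s.
  case E: (drop t O) => [|x s]; last by exists x, s.
  by move: Ht'; rewrite -subn_gt0 -size_drop E.
have HS : S t.+1 = S t + \sum_(c <- oj | ttj c == t) (kji O j c - 1).
  rewrite /S (bigID (fun c => ttj c == t)) addnC; congr (_ + _); apply: eq_bigl => c.
    by rewrite ltnS; case: ltngtP.
  by rewrite ltnS; case: ltngtP.
rewrite /M (Hstep optim R E) HS -/(M t).
case: (eqVneq x.1 j) => Hx; last first.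
  have -> : \sum_(c <- oj | ttj c == t) (kji O j c - 1) = 0.
    rewrite big_pred0 // => c.
    by rewrite (tt_eq _ E); apply/eqP => Ex; move: Hx; rewrite Ex eqxx.
  rewrite addn0 => le; apply: leq_trans le; rewrite leq_add2r.
  apply/bigmax_leqP => b Hb; apply: leq_bigmax_cond; exact: avail_rcons_other Hb.
move: E Hx; case: x => xj c E /= Exj; rewrite Exj in E *; clear Exj.
have Htc : ttj c = t by apply/eqP; rewrite (tt_eq _ E).
have -> : \sum_(c' <- oj | ttj c' == t) (kji O j c' - 1) = kji O j c - 1.
  rewrite sum_oj (big_pred1 c) // => c' /=.
  by rewrite (tt_eq _ E) /= xpair_eqE eqxx /= eq_sym.
have Hc : chosen_from (H t) j c = None by apply/eqP; rewrite (chosenN optim R HO) Htc.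
have [Hd Hw] := pess_core (HR j) Hc (@exists_untaken _ _ _ optim R HO j t) (untaken_ge optim R (eq_leq (esym Htc))).
rewrite /choice (negbTE Hopt).
set ds := pess_choice _ _ _ _ in Hd Hw *.
have HM : \max_(b | available (rcons (H t) (j, c, ds)) j b) Rank (R j) b <= worst_rank (R j) (H t) j c ds.
  apply/bigmax_leqP => b Hb; apply: leq_bigmax_cond; exact: avail_rcons_own Hb.
move: HM Hw; rewrite /M; move: (worst_rank _ _ _ _ _) (kji O j c) (S t) => w k st.
move: (\max_(b | available (H t) j b) Rank (R j) b) => m1.
move: (\max_(b | available (rcons (H t) (j, c, ds)) j b) Rank (R j) b) => m2. lia.
Qed.


Lemma pess_final : ~~ optim j ->
  Rank (R j) (csam O optim R j) + \sum_(c <- oj) (kji O j c - 1) <= n ^ p.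
Proof.
move=> Hopt; have := pess_inv Hopt (leqnn (size O)).
have -> : S (size O) = \sum_(c <- oj) (kji O j c - 1).
  by rewrite /S; apply: eq_bigl => c; rewrite /ttj index_mem memO.
apply: leq_trans; rewrite leq_add2r; apply: leq_bigmax_cond; exact: csam_avail.
Qed.

Lemma nb_mem a l t x s : ttj a < t -> t < ttj l -> drop t O = x :: s ->
  nobody_between O j a l -> x.2 != l.
Proof.
move=> lt1 lt2 E /allP; apply.
have Ht : t < size O by rewrite -subn_gt0 -size_drop E.
have Ex : nth x O t = x by rewrite -[t]addn0 -nth_drop E.
have Hl : ttj l < size O by rewrite /ttj index_mem memO.
have -> : x = nth x (drop (ttj a).+1 (take (ttj l) O)) (t - (ttj a).+1).
  by rewrite nth_drop subnKC // nth_take.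
apply: mem_nth; rewrite size_drop size_takel; [lia | exact: ltnW].
Qed.


Lemma opt_inv (a : 'I_p) b :
  optim j ->
  (forall l t x s, ttj a < t -> t < ttj l -> drop t O = x :: s -> x.2 != l) ->
  available (H (ttj a)) j b ->
  ohead [seq b' <- R j | available (H (ttj a)) j b'] = Some b ->
  forall t, ttj a <= t -> t <= size O ->
  available (H t) j b && [forall b', available (H t) j b' ==> available (H (ttj a)) j b'].
Proof.
move=> Hopt Hnb Hb Hhead; elim => [|t IH] Ht1 Ht2.
  by move: Ht1; rewrite leqn0 => /eqP <-; rewrite Hb /=; apply/forallP => b'; apply/implyP.
case: (leqP (ttj a) t) => Hat; last first.
  have Ea : ttj a = t.+1 by apply/eqP; rewrite eqn_leq Ht1.
  by rewrite -Ea Hb /=; apply/forallP => b'; apply/implyP.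
have /andP[Hbt /forallP Hsub] := IH Hat (ltnW Ht2).
have [x [s E]] : exists x s, drop t O = x :: s.
  case E: (drop t O) => [|x s]; last by exists x, s.
  by move: Ht2; rewrite -subn_gt0 -size_drop E.
rewrite (Hstep optim R E).
case: (eqVneq x.1 j) => Hx.
  move: E Hx; case: x => xj c E /= Exj; rewrite Exj in E *; clear Exj.
  have Htc : ttj c = t by apply/eqP; rewrite (tt_eq _ E).
  have Hc : chosen_from (H t) j c = None by apply/eqP; rewrite (chosenN optim R HO) Htc.
  have Hch : choice optim R (H t) j c = b c.
    rewrite /choice Hopt /opt_choice.
    have memR : forall b0, b0 \in R j by move=> b0; rewrite (perm_mem (HR j)) mem_enum.
    have hasA : has (available (H (ttj a)) j) (R j) by apply/hasP; exists b.
    move: Hhead; rewrite !(ohead_filter b) hasA => -[Eb].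
    have hasA' : has (available (H t) j) (R j) by apply/hasP; exists b.
    rewrite hasA' /= (@find_sub _ b _ _ _ _ hasA) ?Eb // => b' Hb'.
    by have := Hsub b'; rewrite Hb'.
  rewrite Hch; apply/andP; split; first exact: avail_rcons_own2.
  apply/forallP => b'; apply/implyP => Hb'.
  have Hbc : ~~ taken (H t) c (b c) by have := forallP Hbt c; rewrite Hc.
  have /andP[Hb'' _] := avail_rcons_own Hc Hbc Hb'.
  by have := Hsub b'; rewrite Hb''.
apply/andP; split; last first.
  apply/forallP => b'; apply/implyP => Hb'.
  by have := Hsub b'; rewrite (avail_rcons_other (x:=(x.1,x.2,choice optim R (H t) x.1 x.2)) Hx Hb').
apply/forallP => l; have := forallP Hbt l.
rewrite chosen_from_rcons (negbTE Hx) /=.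
case Ecl: (chosen_from (H t) j l) => [d|] // Hnt.
rewrite taken_rcons negb_or Hnt /=.
apply/negP => /andP[/eqP Exl _].
have Hlt : t <= ttj l by rewrite -(chosenN optim R HO) Ecl.
have Hne : ttj l != t by rewrite (tt_eq _ E); apply/eqP => Exj; move: Hx; rewrite Exj eqxx.
have Hne2 : ttj a != t by rewrite (tt_eq _ E); apply/eqP => Exj; move: Hx; rewrite Exj eqxx.
suff: x.2 != l by rewrite Exl eqxx.
apply: (Hnb l t x s _ _ E).
  by rewrite ltn_neqAle Hne2 Hat.
by rewrite ltn_neqAle eq_sym Hne Hlt.
Qed.


Lemma opt_final : optim j ->
  Rank (R j) (csam O optim R j) + \prod_(c <- drop (Kj0 O j) oj) kji O j c <= n ^ p + 1.
Proof.
move=> Hopt; set K0 := Kj0 O j.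
have rle := rank_le (csam O optim R j) (HR j).
case: (ltnP K0 p) => HK; last first.
  by rewrite drop_oversize ?size_oj // big_nil !addn1 ltnS.
have Kc : Kcond O j K0.
  have Hhas : has (Kcond O j) (iota 0 p) by rewrite has_find size_iota.
  by have := nth_find 0 Hhas; rewrite /K0 /Kj0 nth_iota ?add0n // -(size_iota 0 p) -has_find.
set a := nth (Ordinal HK) oj K0.
have Ia : index a oj = K0 by rewrite index_uniq ?size_oj ?oj_uniq.
set h := H (ttj a).
have Hprod : \prod_(c <- drop K0 oj) kji O j c <= #|available h j|.
  rewrite card_avail -(prod_oj xpredT) -[in X in _ <= X](cat_take_drop K0 oj) big_cat /=.
  rewrite [X in _ <= X * _]big1_seq ?mul1n => [|c /andP[_ Hc]]; last first.
    have lt : index c oj < K0 by apply: index_ltn.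
    have : ttj c < ttj a by rewrite ltnNge -(index_oj_le HO) Ia -ltnNge.
    rewrite ltnNge -(chosenN optim R HO) /Fam.
    by case: (chosen_from _ _ _) => // d _; apply: card1.
  rewrite big_seq [X in _ <= X]big_seq; apply: leq_prod => c Hc.
  have : K0 <= index c oj.
    rewrite leqNgt; apply/negP => lt.
    have := oj_uniq HO j; rewrite -(cat_take_drop K0 oj) cat_uniq => /and3P[_ /hasPn Hd _].
    by have := Hd c Hc; rewrite (in_take _ (mem_oj HO j c)) lt.
  rewrite -Ia (index_oj_le HO) => le.
  have := le; rewrite -(chosenN optim R HO) /Fam => /eqP ->.
  exact: (untaken_ge optim R le).
have uR : uniq (R j) by rewrite (perm_uniq (HR j)) enum_uniq.
have memR : forall b0, b0 \in R j by move=> b0; rewrite (perm_mem (HR j)) mem_enum.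
case: (posnP (\prod_(c <- drop K0 oj) kji O j c)) => [->|Ppos].
  by rewrite addn0 (leq_trans rle) // leq_addr.
have : 0 < #|available h j| by apply: leq_trans Hprod.
move/card_gt0P => [b1 Hb1].
have hasA : has (available h j) (R j) by apply/hasP; exists b1.
set f := find (available h j) (R j).
set b := nth b1 (R j) f.
have Hb : available h j b by exact: nth_find.
have Hhead : ohead [seq b' <- R j | available h j b'] = Some b by rewrite (ohead_filter b1) hasA.
have Hnb : forall l t x s, ttj a < t -> t < ttj l -> drop t O = x :: s -> x.2 != l.
  move=> l t x s h1 h2 E; apply: (nb_mem h1 h2 E).
  move/forallP: Kc => /(_ a) /forallP /(_ l) /implyP; apply.
  rewrite Ia eqxx /= -Ia ltnNge (index_oj_le HO) -ltnNge.
  exact: ltn_trans h1 h2.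
have Hta : ttj a <= size O by rewrite ltnW // /ttj index_mem memO.
have /andP[Hfin _] := opt_inv Hopt Hnb Hb Hhead Hta (leqnn _).
have -> : csam O optim R j = b.
  apply/ffunP => l; have [d Hd] := chosen_final optim R HO j l.
  have := forallP Hfin l; have := forallP (csam_avail) l.
  by rewrite Hd => /eqP -> /eqP ->.
have fsz : f < size (R j) by rewrite -has_find.
have Rb : Rank (R j) b = f.+1 by rewrite /Rank index_uniq.
have Hc : #|take f (R j)| = f by rewrite (card_uniqP (take_uniq _ uR)) size_takel // ltnW.
have Hsub : #|take f (R j)| <= #|[predC available h j]|.
  apply: subset_leq_card; apply/subsetP => x Hx; rewrite inE.
  have Hi : index x (take f (R j)) < f by rewrite -{2}(size_takel (ltnW fsz)) index_mem.
  rewrite -(nth_index b1 Hx) nth_take //.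
  by apply/negbT; apply: before_find.
have := cardC (available h j); rewrite card_bundle.
move: Hprod Hsub; rewrite Rb Hc.
move: (\prod_(c <- drop K0 oj) kji O j c) (#|available h j|) (#|[predC available h j]|) => P1 ca cc.
lia.
Qed.

End Pess.

Unset Implicit Arguments.
Set Strict Implicit.

Theorem proposition1 (n p : nat) (O : seq ('I_n * 'I_p)) (HO : is_csam_order O)
    (optim : 'I_n -> bool) (R : 'I_n -> seq (bundle n p))
    (HR : forall j, is_linear_order (R j)) (j : 'I_n) :
  (optim j ->
     Rank (R j) (csam O optim R j) + \prod_(c <- drop (Kj0 O j) (Oj O j)) kji O j c
       <= n ^ p + 1) /\
  (~~ optim j ->
     Rank (R j) (csam O optim R j) + \sum_(c <- Oj O j) (kji O j c - 1) <= n ^ p).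
Proof.
split; [exact: (opt_final HO HR) | exact: (pess_final HO HR)].
Qed.
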